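(* Let $C(m)=\{(Tr(ax))_{x\in L}:a\in\mathcal{R}\}\subseteq R^{|L|}$ and consider the ternary linear code $\phi(C(m))\subseteq\mathbb{F}_3^{3|L|}$. In each of the following cases, $\phi(C(m))$ is optimal, i.e. no ternary linear code of the same length and the same dimension has strictly larger minimum Hamming distance: (i) $m$ is odd and $L=L'$ (so $\phi(C(m))$ has length $(3^{3m+1}-3^{2m+1})/2$); (ii) $m$ is any positive integer and $L=\mathcal{R}^*$ (so $\phi(C(m))$ has length $3^{3m+1}-3^{2m+1}$).
   Context: Let $R=\mathbb{F}_3[u]/(u^3-1)$ and $\mathcal{R}=\mathbb{F}_{3^m}[u]/(u^3-1)=\mathbb{F}_{3^m}+u\mathbb{F}_{3^m}+u^2\mathbb{F}_{3^m}$. Every element of $\mathcal{R}$ is uniquely $x_1+x_2(u-1)+x_3(u-1)^2$ with $x_i\in\mathbb{F}_{3^m}$; $\mathcal{R}^*$ (the units) consists of those with $x_1\neq0$. $Tr:\mathcal{R}\to R$ is $Tr(a+ub+u^2c)=tr(a)+u\,tr(b)+u^2tr(c)$, with $tr$ the absolute trace $\mathbb{F}_{3^m}\to\mathbb{F}_3$. $\mathcal{Q}$ denotes the nonzero squares of $\mathbb{F}_{3^m}$ and $L'=\{x_1+x_2(u-1)+x_3(u-1)^2:x_1\in\mathcal{Q},x_2,x_3\in\mathbb{F}_{3^m}\}$. The Gray map $\phi:R\to\mathbb{F}_3^3$ is $\phi(a'+ub'+u^2c')=(a',b',c')$, extended coordinatewise to $R^n\to\mathbb{F}_3^{3n}$.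 *)

(* Defs.v *)
From HB Require Import structures.
From mathcomp Require Import all_boot all_order all_algebra all_field.
Set Implicit Arguments. Unset Strict Implicit. Unset Printing Implicit Defensive.
Import GRing.Theory.
Local Open Scope ring_scope.

Section Defs.
Variable F : finFieldType.

(* The ring  F[u]/(u^3-1): (a0,a1,a2) stands for a0 + u a1 + u^2 a2. *)
Definition RR := (F * F * F)%type.
Definition c0 (x : RR) : F := x.1.1.
Definition c1 (x : RR) : F := x.1.2.
Definition c2 (x : RR) : F := x.2.
Definition mkR (a b c : F) : RR := (a, b, c).
Definition oneR : RR := mkR 1 0 0.
(* multiplication modulo u^3 = 1 *)
Definition mulR (a x : RR) : RR :=
  mkR (c0 a * c0 x + c1 a * c2 x + c2 a * c1 x)
      (c0 a * c1 x + c1 a * c0 x + c2 a * c2 x)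
      (c0 a * c2 x + c1 a * c1 x + c2 a * c0 x).

(* x1 + x2 (u-1) + x3 (u-1)^2  in the basis 1, u, u^2 *)
Definition ofUm1 (x1 x2 x3 : F) : RR :=
  mkR (x1 - x2 + x3) (x2 - 2%:R * x3) x3.

Definition unitsR : {set RR} := [set x : RR | [exists y : RR, mulR x y == oneR]].

Definition sqQ : {set F} := [set z : F | (z != 0) && [exists y : F, y ^+ 2 == z]].

Definition Lprime : {set RR} :=
  [set ofUm1 t.1.1 t.1.2 t.2 | t in [set t : F * F * F | t.1.1 \in sqQ]].

(* absolute trace F_{3^m} -> F_3, x |-> sum_{i<m} x^(3^i), read back in 'F_3 *)
Definition trF (m : nat) (x : F) : 'F_3 :=
  odflt 0 [pick k : 'F_3 | (nat_of_ord k)%:R == \sum_(i < m) x ^+ (3 ^ i)].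

Definition compR (r : nat) (x : RR) : F :=
  if r == 0%N then c0 x else if r == 1%N then c1 x else c2 x.

(* phi((Tr(a x))_{x in L}) in F_3^{3|L|}, coordinates ordered by enum L *)
Definition codeword (m : nat) (L : {set RR}) (a : RR) : 'rV['F_3]_(3 * #|L|) :=
  \row_(i < 3 * #|L|)
     trF m (compR (i %% 3) (mulR a (nth (0, 0, 0) (enum L) (i %/ 3)))).

Definition phiC (m : nat) (L : {set RR}) : seq 'rV['F_3]_(3 * #|L|) :=
  [seq codeword m L a | a <- enum {: RR}].

End Defs.

Definition hamming (n : nat) (c d : 'rV['F_3]_n) : nat := #|[set i | c 0 i != d 0 i]|.

(* minimum Hamming distance between distinct codewords (n if fewer than 2 words) *)
Definition mindist (n : nat) (P : 'rV['F_3]_n -> bool) : nat :=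
  \big[minn/n]_(c : 'rV['F_3]_n)
     \big[minn/n]_(d : 'rV['F_3]_n | [&& P c, P d & c != d]) hamming c d.

(* the linear code spanned by S (equal to S when S is linear) is optimal:
   no ternary linear code of the same length and dimension has larger
   minimum distance *)
Definition optimal (n : nat) (S : seq 'rV['F_3]_n) : Prop :=
  forall C' : {vspace 'rV['F_3]_n},
    \dim C' = \dim <<S>>%VS ->
    (mindist (fun c => c \in C') <= mindist (fun c => c \in S))%N.

(* Main.v *)
Require Import Defs.
From HB Require Import structures.
From mathcomp Require Import all_boot all_order all_algebra all_field.
From mathcomp Require Import zify ring.
Set Implicit Arguments. Unset Strict Implicit. Unset Printing Implicit Defensive.
Import GRing.Theory.
Local Open Scope ring_scope.

Lemma F3_two (a b : 'F_3) : b != 0 -> (\sum_(l < 3) ((a + l%:R * b != 0)%R : nat) = 2)%N.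
Proof. rewrite !big_ord_recr big_ord0 /=. case: a => [[|[|[|a]]] Ha]; case: b => [[|[|[|b]]] Hb] //; by vm_compute. Qed.

Lemma card_setE (T : finType) (P : pred T) : #|[set i | P i]| = (\sum_i (P i : nat))%N.
Proof. rewrite -sum1_card big_mkcond /=; apply: eq_bigr => i _; by rewrite inE; case: (P i). Qed.

Section Gries.
Variable n : nat.
Local Notation V := 'rV['F_3]_n.
Definition wt (x : V) := #|[set i | x 0 i != 0]|.
Fixpoint gr k d := if k is k'.+1 then (d + gr k' ((d + 2) %/ 3))%N else 0%N.

Lemma wt_eq0 (y : V) : (wt y == 0%N) = (y == 0).
Proof.
rewrite /wt cards_eq0; apply/eqP/eqP => [H|->].
  apply/rowP => i; rewrite mxE; apply/eqP; apply/negPn/negP => Hi.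
  have : i \in [set i | y 0 i != 0] by rewrite inE.
  by rewrite H inE.
by apply/setP => i; rewrite !inE mxE.
Qed.

Definition supA (x c : V) (l : 'I_3) := [set i | (c 0 i != 0) && ((x + l%:R *: c) 0 i != 0)].

Lemma averaging (x c : V) : exists l : 'I_3, (3 * #|supA x c l| <= 2 * wt c)%N.
Proof.
have Hs : (\sum_(l < 3) #|supA x c l| = 2 * wt c)%N.
  rewrite /wt /supA card_setE big_distrr /=.
  under eq_bigr do rewrite card_setE.
  rewrite exchange_big /=; apply: eq_bigr => i _.
  case: (boolP (c 0 i != 0)) => ci /=.
    rewrite muln1 -[RHS](F3_two (x 0 i) ci); apply: eq_bigr => l _; by rewrite !mxE.
  by rewrite muln0 big1.
move: Hs; rewrite !big_ord_recr big_ord0 /=.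
set a0 := #|_|; set a1 := #|_|; set a2 := #|_|.
move=> Hs.
case: (leqP (3 * a0) (2 * wt c)) => h0; first by eexists; exact: h0.
case: (leqP (3 * a1) (2 * wt c)) => h1; first by eexists; exact: h1.
case: (leqP (3 * a2) (2 * wt c)) => h2; first by eexists; exact: h2.
lia.
Qed.

Lemma griesmer (k : nat) : forall (D : {vspace V}) (S : {set 'I_n}) (d : nat),
  \dim D = k -> (forall x, x \in D -> forall i, i \notin S -> x 0 i = 0) ->
  (forall x, x \in D -> x != 0 -> (d <= wt x)%N) -> (gr k d <= #|S|)%N.
Proof.
elim: k => [//|k IH] D S d dimD suppD wD /=.
have D0 : vpick D != 0 by rewrite vpick0 -dimv_eq0 dimD.
have PD : (vpick D \in D) && (vpick D != 0) by rewrite memv_pick D0.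
case: (@arg_minnP _ (vpick D) (fun x => (x \in D) && (x != 0)) wt PD) => c /andP[cD c0] cmin.
have cmin' : forall y : V, y \in D -> y != 0 -> (wt c <= wt y)%N.
  by move=> y yD y0; apply: cmin; rewrite yD y0.
set T := [set i | c 0 i != 0].
have wc : wt c = #|T| by [].
have wpos : (0 < wt c)%N by rewrite lt0n wt_eq0.
have TS : T \subset S.
  apply/subsetP => i; rewrite inE; apply: contraR => iS; by rewrite suppD.
pose M : 'M['F_3]_n := diag_mx (\row_i ((i \notin T)%:R)).
pose f : 'End(V) := linfun (mulmxr M).
have fE x i : (f x) 0 i = if i \in T then 0 else x 0 i.
  by rewrite lfunE /= mul_mx_diag !mxE; case: (i \in T); rewrite /= ?mulr0 ?mulr1.
have wdec x (l : 'I_3) : wt (x + l%:R *: c) =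
    (#|supA x c l| + wt (f x))%N.
  rewrite /wt /supA -(cardsID T [set i | (x + l%:R *: c) 0 i != 0]); congr (_ + _)%N.
    by apply/eq_card => i; rewrite !inE andbC.
  apply/eq_card => i; rewrite !inE fE; case: (boolP (i \in T)); rewrite inE => iT; first by rewrite iT.
  rewrite iT /=; move: iT; rewrite negbK !mxE => /eqP ->; by rewrite mulr0 addr0.
have wt0 : wt 0 = 0%N by apply/eqP; rewrite wt_eq0.
have fc : f c = 0.
  apply/rowP => i; rewrite fE mxE; case: (boolP (i \in T)) => //; by rewrite inE negbK => /eqP.
have ker_sub : (D :&: lker f <= <[c]>)%VS.
  apply/subvP => x /memv_capP [xD]; rewrite memv_ker => /eqP fx0.
  have [l hl] := averaging x c.
  have := wdec x l; rewrite fx0 wt0 addn0 => wx.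
  case: (eqVneq (x + l%:R *: c) 0) => [xc0 | xcn0].
    apply/vlineP; exists (- l%:R); rewrite scaleNr; apply/eqP; by rewrite -addr_eq0 xc0.
  have h := cmin' _ (memvD xD (memvZ _ cD)) xcn0.
  rewrite wx in h. have : False by lia.
  by [].
have dimK : \dim (D :&: lker f) = 1%N.
  apply/eqP; rewrite eqn_leq; apply/andP; split.
    by have := dimvS ker_sub; rewrite dim_vline c0.
  have : (<[c]> <= D :&: lker f)%VS by rewrite -memvE memv_cap cD memv_ker fc eqxx.
  by move/dimvS; rewrite dim_vline c0.
have dimI : \dim (f @: D) = k by have := limg_ker_dim f D; rewrite dimK dimD add1n => [[]].
apply: (@leq_trans (d + #|S :\: T|)).
  rewrite leq_add2l; apply: (IH (f @: D)%VS) => //.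
    move=> y /memv_imgP [x xD ->] i; rewrite in_setD negb_and negbK fE => /orP [iT|iS].
      by rewrite iT.
    case: ifP => // _; exact: suppD.
  move=> y /memv_imgP [x xD ->] y0.
  have [l hl] := averaging x c.
  have wx := wdec x l.
  have xcn0 : x + l%:R *: c != 0.
    apply: contraNneq y0 => xc0; rewrite -wt_eq0; move: wx; rewrite xc0 wt0 => /esym/eqP.
    by rewrite addn_eq0 => /andP[_].
  have h := cmin' _ (memvD xD (memvZ _ cD)) xcn0.
  rewrite wx in h.
  have := wD c cD c0.
  move: h hl; set A := #|supA x c l|; set B := wt (f x); set C := wt c.
  lia.
rewrite -(cardsID T S) (setIidPr TS) leq_add2r -wc; exact: wD.
Qed.

Lemma gr_mono k j d : (gr k d <= gr (k + j) d)%N.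
Proof. elim: k d => [|k IH] d /=; first by []. by rewrite leq_add2l. Qed.
End Gries.

Local Open Scope nat_scope.

Lemma div3_helper a : (3 * a + 3) %/ 3 = a + 1.
Proof. lia. Qed.
Lemma div3_helper2 a : (3 * a + 2) %/ 3 = a.
Proof. lia. Qed.

Lemma grL1 j A l : 2 * gr (j + l) (3 ^ j * A + 1) + 3 * A = A * 3 ^ j.+1 + 2 * j + 2 * gr l (A + 1).
Proof.
elim: j => [|j IH] /=; first by rewrite expn0 mul1n add0n expn1; lia.
have -> : 3 ^ j.+1 * A + 1 + 2 = 3 * (3 ^ j * A) + 3 by rewrite expnS; lia.
rewrite div3_helper.
move: IH; rewrite !expnS. set P := 3 ^ j. lia.
Qed.

Lemma grL2 l B : 2 * gr l (3 ^ l * B) + 3 * B = B * 3 ^ l.+1.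
Proof.
elim: l => [|l IH] /=; first by rewrite muln0 add0n; lia.
have -> : 3 ^ l.+1 * B + 2 = 3 * (3 ^ l * B) + 2 by rewrite expnS; lia.
rewrite div3_helper2.
move: IH; rewrite !expnS. set P := 3 ^ l. lia.
Qed.

Lemma grL3 m : 0 < m -> gr m (2 * 3 ^ m - 1) = 3 ^ m.+1 - 4.
Proof.
case: m => [//|m] _ /=.
have h1 : (2 * 3 ^ m.+1 - 1 + 2) %/ 3 = 3 ^ m * 2.
  rewrite expnS; have := expn_gt0 3 m; set P := 3 ^ m => hP.
  rewrite (_ : 2 * (3 * P) - 1 + 2 = 3 * (P * 2) + 1); last by lia.
  lia.
rewrite h1; have := grL2 m 2; rewrite !expnS; have := expn_gt0 3 m; set P := 3 ^ m.
lia.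
Qed.

Lemma gr_units m : 0 < m ->
  3 * ((3 ^ m - 1) * (3 ^ m * 3 ^ m)) < gr (3 * m) (2 * (3 ^ m - 1) * (3 ^ m * 3 ^ m) + 1).
Proof.
move=> m0.
have e : 3 * m = 2 * m + m by lia.
have hq : 3 ^ (2 * m) = 3 ^ m * 3 ^ m by rewrite mulSn mul1n expnD.
have := grL1 (2 * m) (2 * 3 ^ m - 2) m.
rewrite (_ : 2 * 3 ^ m - 2 + 1 = 2 * 3 ^ m - 1); last by have := expn_gt0 3 m; lia.
rewrite grL3 // expnS hq !expnS -e.
rewrite (_ : 3 ^ m * 3 ^ m * (2 * 3 ^ m - 2) + 1 = 2 * (3 ^ m - 1) * (3 ^ m * 3 ^ m) + 1); last first.
  have := expn_gt0 3 m; set P := 3 ^ m; nia.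
have := expn_gt0 3 m; set P := 3 ^ m; set G := gr _ _. nia.
Qed.

Lemma gr_Lp m : 0 < m -> forall N, 2 * N = 3 ^ m - 1 ->
  3 * (N * (3 ^ m * 3 ^ m)) < gr (3 * m) (2 * N * (3 ^ m * 3 ^ m) + 1).
Proof.
move=> m0 N hN.
have e : 3 * m = 2 * m + m by lia.
have hq : 3 ^ (2 * m) = 3 ^ m * 3 ^ m by rewrite mulSn mul1n expnD.
have := grL1 (2 * m) (3 ^ m - 1) m.
rewrite (_ : 3 ^ m - 1 + 1 = 3 ^ m * 1); last by have := expn_gt0 3 m; lia.
have := grL2 m 1.
rewrite expnS hq !expnS -e.
rewrite (_ : 3 ^ m * 3 ^ m * (3 ^ m - 1) + 1 = 2 * N * (3 ^ m * 3 ^ m) + 1); last first.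
  rewrite hN; have := expn_gt0 3 m; set P := 3 ^ m; nia.
move: hN; have := expn_gt0 3 m; set P := 3 ^ m; set G := gr _ _. set G2 := gr _ _. nia.
Qed.

Local Open Scope ring_scope.

Section Trace.
Variables (F : finFieldType) (m : nat).
Hypotheses (m_gt0 : (0 < m)%N) (cardF : #|F| = (3 ^ m)%N).

Lemma pchar3 : (3%N \in [pchar F]).
Proof. exact: (card_finPcharP cardF). Qed.
Lemma h3 : 3%:R = 0 :> F.
Proof. exact: (pcharf0 pchar3). Qed.
Lemma natr_mod3 k : k%:R = (k %% 3)%:R :> F.
Proof. by rewrite {1}(divn_eq k 3) natrD natrM h3 mulr0 add0r. Qed.

Lemma one3 : (1 : F) != 0. Proof. exact: oner_neq0. Qed.
Lemma two3 : (2%:R : F) != 0.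
Proof. apply/eqP => h; have := h3; rewrite (natrD F 2 1) h add0r => /eqP; by rewrite oner_eq0. Qed.

Lemma natr_inj3 a b : (a < 3)%N -> (b < 3)%N -> a%:R = b%:R :> F -> a = b.
Proof.
move=> ha hb; wlog ab : a b ha hb / (a <= b)%N.
  move=> H e; case: (leqP a b) => h; first exact: H.
  apply/esym; apply: (H b a hb ha (ltnW h)); by rewrite e.
move=> e; apply/eqP; rewrite eqn_leq ab /=; case: leqP => // hba.
have : (b - a)%:R != 0 :> F.
  have : (b - a = 1 \/ b - a = 2)%N by lia.
  by case=> ->; [exact: one3 | exact: two3].
by rewrite natrB // e subrr eqxx.
Qed.

Lemma eq_mod3 a b : (a%:R == b%:R :> F) = (a %% 3 == b %% 3)%N.
Proof.
rewrite [a%:R]natr_mod3 [b%:R]natr_mod3; apply/eqP/eqP => [|->//].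
by apply: natr_inj3; rewrite ltn_mod.
Qed.

Lemma cube_add (x y : F) : (x + y) ^+ 3 = x ^+ 3 + y ^+ 3.
Proof.
have -> : (x + y) ^+ 3 = x ^+ 3 + y ^+ 3 + 3%:R * (x ^+ 2 * y + x * y ^+ 2) by ring.
by rewrite h3 mul0r addr0.
Qed.

Lemma pow3_add i (x y : F) : (x + y) ^+ (3 ^ i) = x ^+ (3 ^ i) + y ^+ (3 ^ i).
Proof.
elim: i x y => [|i IH] x y; first by rewrite !expr1.
by rewrite expnS !exprM cube_add IH.
Qed.

Definition Tr (x : F) : F := \sum_(i < m) x ^+ (3 ^ i)%N.

Lemma TrD x y : Tr (x + y) = Tr x + Tr y.
Proof. rewrite /Tr -big_split /=; apply: eq_bigr => i _; exact: pow3_add. Qed.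
Lemma Tr0 : Tr 0 = 0.
Proof. by apply: (@addrI _ (Tr 0)); rewrite addr0 -TrD addr0. Qed.
Lemma TrN x : Tr (- x) = - Tr x.
Proof. by apply/eqP; rewrite -addr_eq0 addrC -TrD subrr Tr0. Qed.
Lemma TrB x y : Tr (x - y) = Tr x - Tr y.
Proof. by rewrite TrD TrN. Qed.

Lemma Tr_cube x : Tr x ^+ 3 = Tr x.
Proof.
have cs : forall (I : Type) (r : seq I) (P : pred I) (G : I -> F),
    (\sum_(i <- r | P i) G i) ^+ 3 = \sum_(i <- r | P i) G i ^+ 3.
  move=> I r P G; apply: (big_morph (fun z : F => z ^+ 3)) => [a b|]; first exact: cube_add.
  by rewrite expr0n.
rewrite /Tr cs.
under eq_bigr do rewrite -exprM -expnSr.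
case: m m_gt0 cardF => [//|k] _ cF.
rewrite big_ord_recr big_ord_recl /= -cF expf_card addrC; congr (_ + _).
Qed.

Lemma cube_012 (z : F) : z ^+ 3 = z -> [\/ z = 0, z = 1 | z = 2%:R].
Proof.
move=> hz.
have : z * (z - 1) * (z - 2%:R) = 0.
  have -> : z * (z - 1) * (z - 2%:R) = z ^+ 3 - z + 3%:R * (z - z ^+ 2) by ring.
  by rewrite h3 mul0r addr0 hz subrr.
move/eqP; rewrite !mulf_eq0 !subr_eq0 => /orP[/orP[|]|] /eqP; by [constructor 1|constructor 2|constructor 3].
Qed.

Lemma Tr_012 x : exists2 k, (k < 3)%N & Tr x = k%:R.
Proof.
by case: (cube_012 (Tr_cube x)) => ->; [exists 0%N | exists 1%N | exists 2%N].
Qed.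

Lemma trFE x : (trF m x : nat)%:R = Tr x.
Proof.
rewrite /trF; case: pickP => [k /eqP -> //|H].
exfalso; have [k hk e] := Tr_012 x.
have := H (Ordinal hk); by rewrite /= -/(Tr x) e eqxx.
Qed.

Lemma trF_lt3 (x : F) : (trF m x < 3)%N.
Proof. by case: (trF m x). Qed.

Lemma trF_eq (x y : F) : (trF m x == trF m y) = (Tr x == Tr y).
Proof.
rewrite -!trFE; apply/eqP/eqP => [->//|e].
by apply/val_inj/natr_inj3 => //; apply: trF_lt3.
Qed.

Lemma trF_eq0 (x : F) : (trF m x == 0) = (Tr x == 0).
Proof.
rewrite -trFE; apply/eqP/eqP => [->//|e].
apply/val_inj/natr_inj3 => //; first exact: trF_lt3.
Qed.


Lemma eq0_mod3 a : (a%:R == 0 :> F) = (a %% 3 == 0)%N.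
Proof. exact: (eq_mod3 a 0). Qed.

Lemma Tr_nz : exists x : F, Tr x != 0.
Proof.
pose p : {poly F} := \sum_(i < m) 'X^(3 ^ i).
have pE x : p.[x] = Tr x by rewrite horner_sum; apply: eq_bigr => i _; rewrite hornerXn.
have p0 : p != 0.
  apply/eqP => /(congr1 (fun q : {poly F} => q`_1)); rewrite coef_sum coef0.
  case: m m_gt0 => [//|k] _; rewrite big_ord_recl coefXn expn0 eqxx big1 ?addr0.
    by apply/eqP/oner_neq0.
  move=> i _; rewrite coefXn /= expnS.
  rewrite (_ : (1 == 3 * 3 ^ i)%N = false) //; have := expn_gt0 3 i; lia.
have sz : (size p <= 3 ^ m)%N.
  rewrite /p; apply: (big_ind (fun q : {poly F} => size q <= 3 ^ m)%N) => [|q1 q2 h1 h2|i _].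
  - by rewrite size_poly0.
  - by apply: leq_trans (size_polyD _ _) _; rewrite geq_max h1 h2.
  - by rewrite size_polyXn ltn_exp2l.
case: (pickP (fun x => Tr x != 0)) => [x hx | H]; first by exists x.
exfalso; move/eqP: p0; apply; apply: (@roots_geq_poly_eq0 _ _ (enum F)).
- by apply/allP => x _; rewrite /root pE; have := H x; move/negbFE.
- exact: enum_uniq.
- by rewrite -cardE cardF.
Qed.

Definition kerT := [set y : F | Tr y == 0].
Definition tnz := #|[set y : F | Tr y != 0]|.

Lemma card_fiber a : #|[set y | Tr y == Tr a]| = #|kerT|.
Proof.
have -> : [set y | Tr y == Tr a] = (fun y => y - a) @^-1: kerT.
  by apply/setP => y; rewrite !inE TrB subr_eq0.
by rewrite card_preimset //; exact: addIr.
Qed.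

Lemma card_tt : tnz = (2 * #|kerT|)%N /\ #|F| = (3 * #|kerT|)%N.
Proof.
have [x0 hx0] := Tr_nz.
have Hu : [set y | Tr y != 0] = [set y | Tr y == Tr x0] :|: [set y | Tr y == Tr (x0 + x0)].
  apply/setP => y; rewrite !inE TrD.
  have [k hk ->] := Tr_012 y; have [j hj e] := Tr_012 x0.
  move: hx0; rewrite e -natrD !eq0_mod3 !eq_mod3; clear e.
  move: hk hj; case: k => [|[|[|k]]]; case: j => [|[|[|j]]] //= => *; lia.
have Hi : [set y | Tr y == Tr x0] :&: [set y | Tr y == Tr (x0 + x0)] = set0.
  apply/setP => y; rewrite !inE TrD; apply/negbTE; apply/negP => /andP[/eqP -> /eqP h].
  have : Tr x0 = 0 by apply: (@addrI _ (Tr x0)); rewrite addr0 -h.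
  by move/eqP; rewrite (negbTE hx0).
have e1 : tnz = (2 * #|kerT|)%N.
  by rewrite /tnz Hu; have := cardsUI [set y | Tr y == Tr x0] [set y | Tr y == Tr (x0 + x0)];
    rewrite Hi cards0 addn0 !card_fiber => ->; lia.
split => //.
have := cardsC kerT.
have -> : ~: kerT = [set y | Tr y != 0] by apply/setP => y; rewrite !inE.
by rewrite -/tnz e1 => <-; lia.
Qed.

Lemma count_lin (c b : F) : c != 0 -> #|[set y : F | Tr (c * y + b) != 0]| = tnz.
Proof.
move=> cz.
have -> : [set y | Tr (c * y + b) != 0] = (fun y => c * y + b) @^-1: [set y | Tr y != 0].
  by apply/setP => y; rewrite !inE.
by rewrite card_preimset // => y1 y2 /addIr /(mulfI cz).
Qed.


Lemma card_sq : (2 * #|sqQ F|)%N = #|F|.-1.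
Proof.
have -> : #|F|.-1 = #|[set y : F | y != 0]|.
  by rewrite -(cardsC1 (0:F)); apply: eq_card => y; rewrite !inE.
rewrite -[X in _ = X]sum1dep_card (partition_big (fun y : F => y ^+ 2) (fun z => z \in sqQ F)) /=; last first.
  move=> y y0; rewrite /sqQ inE expf_neq0 //=; apply/existsP; by exists y.
rewrite mulnC -sum_nat_const; apply: eq_bigr => z; rewrite /sqQ inE => /andP [z0 /existsP [w /eqP wz]].
have w0 : w != 0 by apply: contraNneq z0 => w0; rewrite -wz w0 expr0n.
rewrite sum1dep_card (_ : [set y | (y != 0) && (y ^+ 2 == z)] = [set w; -w]).
  rewrite cards2 (_ : (w != -w) = true) //; apply/eqP => e.
  have : 2%:R * w = 0 by rewrite mulr2n mulrDl mul1r {1}e addNr.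
  by move/eqP; rewrite mulf_eq0 (negbTE two3) (negbTE w0).
apply/setP => y; rewrite !inE -wz eqf_sqr.
case: (boolP (y == w)) => [/eqP->|_]; first by rewrite w0.
case: (boolP (y == -w)) => [/eqP->|_]; by rewrite ?oppr_eq0 ?w0 ?andbF.
Qed.

Lemma pow3_mod4 i : (3 ^ (2 * i + 1) %% 4 = 3)%N.
Proof.
elim: i => [//|i IH].
rewrite (_ : 2 * i.+1 + 1 = (2 * i + 1) + 2)%N; last by lia.
rewrite expnD; move: IH; set x := (3 ^ _)%N; rewrite (_ : (3 ^ 2 = 9)%N) //; lia.
Qed.

Lemma neg1_nsq : odd m -> forall y : F, y ^+ 2 != -1.
Proof.
move=> om y; apply/eqP => h.
have hm : (3 ^ m = 2 * (2 * (3 ^ m %/ 4) + 1) + 1)%N.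
  have e := pow3_mod4 m./2.
  have em : m = (2 * m./2 + 1)%N by have := odd_double_half m; rewrite om -muln2; lia.
  rewrite -em in e; have := divn_eq (3 ^ m) 4; lia.
have := expf_card y; rewrite cardF hm exprD exprM h expr1.
rewrite exprD exprM sqrrN !expr1n mul1r expr1 mulN1r => e.
have : 2%:R * y = 0 by rewrite mulr2n mulrDl mul1r -{1}e addNr.
move/eqP; rewrite mulf_eq0 (negbTE two3) /= => /eqP y0.
by move: h; rewrite y0 expr0n /= => /eqP; rewrite eq_sym oppr_eq0 oner_eq0.
Qed.

Definition sqA (a : F) := [set s in sqQ F | Tr (a * s) != 0].

Lemma sq_split (a : F) : odd m -> a != 0 -> (2 * #|sqA a|)%N = tnz.
Proof.
move=> om a0; rewrite /sqA.
rewrite /sqQ; set Q := [set z : F | _].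
pose nQ := (fun s : F => - s) @^-1: Q.
have cnQ : #|nQ| = #|Q| by rewrite card_preimset //; exact: oppr_inj.
have disj : Q :&: nQ = set0.
  apply/setP => s; rewrite !inE; apply/negbTE; apply/negP.
  case/andP=> /andP [s0 /existsP [u /eqP us]] /andP [_ /existsP [v /eqP vs]].
  have u0 : u != 0 by apply: contraNneq s0 => u0; rewrite -us u0 expr0n.
  have := neg1_nsq om (v / u); rewrite expr_div_n vs -us mulNr divff ?expf_neq0 //.
  by rewrite eqxx.
have cov : Q :|: nQ = [set s : F | s != 0].
  apply/eqP; rewrite eqEcard; apply/andP; split.
    apply/subsetP => s; rewrite !inE => /orP [/andP [] //| /andP [] ]; by rewrite oppr_eq0.
  have := cardsUI Q nQ; rewrite disj cards0 addn0 cnQ => ->.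
  have -> : #|[set s : F | s != 0]| = #|F|.-1.
    by rewrite -(cardsC1 (0:F)); apply: eq_card => y; rewrite !inE.
  rewrite -card_sq (_ : sqQ F = Q) //; lia.
have -> : tnz = #|[set s | Tr (a * s) != 0]|.
  by rewrite -(count_lin 0 a0); apply: eq_card => s; rewrite !inE addr0.
have -> : [set s | Tr (a * s) != 0] = [set s in Q | Tr (a * s) != 0] :|: [set s in nQ | Tr (a * s) != 0].
  apply/setP => s; rewrite !inE -andb_orl.
  case: (boolP (Tr (a * s) != 0)) => h; rewrite ?andbF ?andbT //.
  have : s \in [set s : F | s != 0].
    by rewrite inE; apply: contraNneq h => ->; rewrite mulr0 Tr0.
  by rewrite -cov !inE => ->.
have := cardsUI [set s in Q | Tr (a * s) != 0] [set s in nQ | Tr (a * s) != 0].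
rewrite (_ : _ :&: _ = set0); last first.
  apply/setP => s; rewrite !inE; apply/negbTE/negP => /andP [/andP [h1 _] /andP [h2 _]].
  have : s \in Q :&: nQ by rewrite !inE h1 h2.
  by rewrite disj inE.
rewrite cards0 addn0 => ->.
have -> : #|[set s in nQ | Tr (a * s) != 0]| = #|[set s in Q | Tr (a * s) != 0]|.
  rewrite -(card_preimset _ (@oppr_inj F)); apply: eq_card => s; rewrite !inE.
  by rewrite mulrN TrN !oppr_eq0 opprK.
by rewrite mul2n addnn.
Qed.

End Trace.

Section RingPart.
Variables (F : finFieldType) (m : nat).
Hypotheses (m_gt0 : (0 < m)%N) (cardF : #|F| = (3 ^ m)%N).

Definition sigR (x : RR F) : F := c0 x + c1 x + c2 x.

Lemma sigM a x : sigR (mulR a x) = sigR a * sigR x.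
Proof. rewrite /sigR /mulR /mkR /c0 /c1 /c2 /=; ring. Qed.

Lemma units_sig : unitsR F = [set x | sigR x != 0].
Proof.
apply/setP => x; rewrite !inE; apply/existsP/idP => [[y /eqP e]|sx].
  apply: contra_neq (@oner_neq0 F) => s0.
  have := sigM x y; rewrite e s0 mul0r /sigR /oneR /mkR /c0 /c1 /c2 /= addr0 addr0 => ->.
  by [].
have h3F := h3 cardF.
move: sx; case: x => [[x0 x1] x2]; rewrite /sigR /c0 /c1 /c2 /= => sx.
have s3 : (x0 + x1 + x2) ^+ 3 != 0 by rewrite expf_neq0.
pose z := mulR (x0, x1, x2) (x0, x1, x2).
exists (mkR ((x0 + x1 + x2) ^- 3 * c0 z) ((x0 + x1 + x2) ^- 3 * c1 z) ((x0 + x1 + x2) ^- 3 * c2 z)).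
rewrite /oneR /mulR /mkR /z /c0 /c1 /c2 /=; rewrite /c0 /c1 /c2 /=.
apply/eqP; congr (_, _, _).
- rewrite -(mulVf s3).
  transitivity ((x0 + x1 + x2) ^- 3 * ((x0 + x1 + x2) ^+ 3 - 3%:R * (x1*x2^+2 + x1^+2*x2 + x0*x2^+2 + x0*x1^+2 + x0^+2*x2 + x0^+2*x1))).
    ring.
  by rewrite h3F mul0r subr0.
- transitivity ((x0 + x1 + x2) ^- 3 * (3%:R * (x1^+2*x2 + x0*x2^+2 + x0^+2*x1))).
    ring.
  by rewrite h3F mul0r mulr0.
- transitivity ((x0 + x1 + x2) ^- 3 * (3%:R * (x1*x2^+2 + x0*x1^+2 + x0^+2*x2))).
    ring.
  by rewrite h3F mul0r mulr0.
Qed.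

Lemma Lprime_sig : Lprime F = [set x | sigR x \in sqQ F].
Proof.
apply/setP => x; rewrite inE; apply/imsetP/idP => [[[[a b] c]] /= ha ->|hx].
  rewrite inE /= in ha; rewrite /sigR /ofUm1 /mkR /c0 /c1 /c2 /=.
  by rewrite (_ : _ + _ + _ = a) //; ring.
exists (sigR x, c1 x + 2%:R * c2 x, c2 x); first by rewrite inE.
case: x hx => [[x0 x1] x2] hx; rewrite /sigR /ofUm1 /mkR /c0 /c1 /c2 /=.
congr (_, _, _); ring.
Qed.

Lemma sum_RR (f : RR F -> nat) :
  (\sum_(x : RR F) f x = \sum_(a : F) \sum_(b : F) \sum_(c : F) f (a, b, c))%N.
Proof.
symmetry; rewrite pair_big /=.
transitivity (\sum_(p : F * F) \sum_(c : F) f (p, c))%N.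
  by apply: eq_bigr => [[a b]] _.
by rewrite pair_big /=; apply: eq_bigr => [[[a b] c]] _.
Qed.

Lemma swap3 (G : F -> F -> F -> nat) :
  (\sum_(a : F) \sum_(b : F) \sum_(c : F) G a b c = \sum_(c : F) \sum_(b : F) \sum_(a : F) G a b c)%N.
Proof.
rewrite exchange_big /=; under eq_bigr do rewrite exchange_big /=.
rewrite exchange_big /=; apply: eq_bigr => c _; by rewrite exchange_big.
Qed.

Lemma count_sig_lin (P : {set F}) (al be ga : F) :
  #|[set x : RR F | (sigR x \in P) && (Tr m (al * c0 x + be * c1 x + ga * c2 x) != 0)]| =
  (\sum_(b : F) \sum_(c : F) \sum_(s : F)
     (((s \in P) && (Tr m (al * s + (be - al) * b + (ga - al) * c) != 0))%R : nat))%N.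
Proof.
rewrite card_setE sum_RR swap3 exchange_big /=.
apply: eq_bigr => b _; apply: eq_bigr => c _.
rewrite (reindex_inj (addIr (- (b + c)))) /=.
apply: eq_bigr => s _; rewrite /sigR /c0 /c1 /c2 /=.
congr (nat_of_bool (_ && _)); first by congr (_ \in P); ring.
by congr (Tr m _ != 0); ring.
Qed.


Lemma sumC (T : finType) n : (\sum_(i : T) n = #|T| * n)%N.
Proof. by rewrite sum_nat_const. Qed.

Definition PA (P : {set F}) (a : F) := [set s in P | Tr m (a * s) != 0].
Definition Lset (P : {set F}) (al be ga : F) :=
  [set x : RR F | (sigR x \in P) && (Tr m (al * c0 x + be * c1 x + ga * c2 x) != 0)].

Lemma inner_count (b : bool) (k K : F) : k != 0 ->
  (\sum_(y : F) ((b && (Tr m (k * y + K) != 0))%R : nat) = b * tnz F m)%N.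
Proof.
move=> kz; case: b; last by rewrite mul0n big1.
by rewrite mul1n -(count_lin m K kz) card_setE.
Qed.

Lemma card_lin (P : {set F}) (al be ga : F) :
  [|| al != 0, be != 0 | ga != 0] ->
  (forall a : F, a != 0 -> (#|P| * tnz F m <= #|F| * #|PA P a|)%N) ->
  (#|P| * #|F| * tnz F m <= #|Lset P al be ga|)%N.
Proof.
move=> nz HP; rewrite /Lset count_sig_lin.
have Ps : (\sum_(s : F) ((s \in P) : nat) = #|P|)%N.
  by rewrite -sum1_card [RHS]big_mkcond /=; apply: eq_bigr => s _; case: (s \in P).
case: (eqVneq be al) => [ebe | nbe].
  case: (eqVneq ga al) => [ega | nga].
    have al0 : al != 0 by move: nz; rewrite ebe ega !orbb.
    rewrite ebe ega subrr.
    have -> : (\sum_(b : F) \sum_(c : F) \sum_(s : F)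
        (((s \in P) && (Tr m (al * s + 0 * b + 0 * c) != 0))%R : nat) =
        \sum_(b : F) \sum_(c : F) #|PA P al|)%N.
      apply: eq_bigr => b _; apply: eq_bigr => c _.
      by rewrite /PA card_setE; apply: eq_bigr => s _; rewrite !mul0r !addr0.
    rewrite !sumC; have h := HP al al0; rewrite mulnAC mulnC; exact: (leq_mul (leqnn _) h).
  have -> : (\sum_(b : F) \sum_(c : F) \sum_(s : F)
      (((s \in P) && (Tr m (al * s + (be - al) * b + (ga - al) * c) != 0))%R : nat) =
      \sum_(b : F) \sum_(s : F) ((s \in P) * tnz F m))%N.
    apply: eq_bigr => b _; rewrite exchange_big /=; apply: eq_bigr => s _.
    rewrite -(@inner_count (s \in P) (ga - al) (al * s + (be - al) * b)); last by rewrite subr_eq0.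
    by apply: eq_bigr => c _; rewrite addrC.
  rewrite sumC -big_distrl /= Ps mulnCA mulnA; exact: leqnn.
have -> : (\sum_(b : F) \sum_(c : F) \sum_(s : F)
    (((s \in P) && (Tr m (al * s + (be - al) * b + (ga - al) * c) != 0))%R : nat) =
    \sum_(c : F) \sum_(s : F) ((s \in P) * tnz F m))%N.
  rewrite exchange_big /=; apply: eq_bigr => c _; rewrite exchange_big /=; apply: eq_bigr => s _.
  rewrite -(@inner_count (s \in P) (be - al) (al * s + (ga - al) * c)); last by rewrite subr_eq0.
  by apply: eq_bigr => b _; congr (nat_of_bool (_ && (Tr m _ != 0))); ring.
rewrite sumC -big_distrl /= Ps mulnCA mulnA; exact: leqnn.
Qed.

End RingPart.

Lemma index_split N (G : nat -> nat -> nat) :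
  (\sum_(i < 3 * N) G (i %/ 3) (i %% 3) = \sum_(k < N) \sum_(j < 3) G k j)%N.
Proof.
rewrite -(big_mkord xpredT (fun i => G (i %/ 3)%N (i %% 3)%N)).
elim: N => [|N IH]; first by rewrite muln0 big_geq // big_ord0.
rewrite big_ord_recr /= -IH !big_ord_recr big_ord0 /= add0n.
rewrite (_ : 3 * N.+1 = (3 * N).+3)%N; last by lia.
rewrite !big_nat_recr //= -!addnA; congr (_ + _)%N.
have e0 : ((3 * N) %/ 3 = N /\ (3 * N) %% 3 = 0)%N by split; lia.
have e1 : ((3 * N).+1 %/ 3 = N /\ (3 * N).+1 %% 3 = 1)%N by split; lia.
have e2 : ((3 * N).+2 %/ 3 = N /\ (3 * N).+2 %% 3 = 2)%N by split; lia.
case: e0 => -> ->; case: e1 => -> ->; case: e2 => -> ->.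
by rewrite addnA.
Qed.

Lemma enum_sum (T : finType) (A : {set T}) x0 (H : T -> nat) :
  (\sum_(k < #|A|) H (nth x0 (enum A) k) = \sum_(x in A) H x)%N.
Proof. by rewrite -[RHS]big_enum [RHS](big_nth x0) [RHS]big_mkord -cardE. Qed.

Lemma bigminn_seq (I : eqType) (r : seq I) (P : pred I) (G : I -> nat) x0 i :
  i \in r -> P i -> (\big[minn/x0]_(j <- r | P j) G j <= G i)%N.
Proof.
elim: r => //= y r IH; rewrite inE big_cons => /orP [/eqP <-|ir] Pi.
  by rewrite Pi geq_minl.
case: (P y); last exact: IH.
exact: leq_trans (geq_minr _ _) (IH ir Pi).
Qed.

Lemma bigminn_le (I : finType) (P : pred I) (G : I -> nat) x0 i :
  P i -> (\big[minn/x0]_(j | P j) G j <= G i)%N.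
Proof. by apply: bigminn_seq; rewrite mem_index_enum. Qed.

Section Final.
Variables (F : finFieldType) (m : nat).
Hypotheses (m_gt0 : (0 < m)%N) (cardF : #|F| = (3 ^ m)%N).

Definition subR (a b : RR F) : RR F := mkR (c0 a - c0 b) (c1 a - c1 b) (c2 a - c2 b).

Lemma compR_sub j a b x :
  compR j (mulR (subR a b) x) = compR j (mulR a x) - compR j (mulR b x).
Proof.
rewrite /compR; case: ifP => _; [|case: ifP => _]; rewrite /mulR /subR /mkR /c0 /c1 /c2 /=; ring.
Qed.

Lemma hamming_cw (L : {set RR F}) a b :
  hamming (codeword m L a) (codeword m L b) = wt (codeword m L (subR a b)).
Proof.
rewrite /hamming /wt; apply: eq_card => i; rewrite !inE !mxE compR_sub.
by rewrite (trF_eq m_gt0 cardF) (trF_eq0 m_gt0 cardF) (TrB cardF) subr_eq0.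
Qed.


Lemma card_Lsig (P : {set F}) : #|[set x : RR F | sigR x \in P]| = (#|F| * (#|F| * #|P|))%N.
Proof.
rewrite card_setE sum_RR swap3.
transitivity (\sum_(c : F) \sum_(b : F) #|P|)%N; last by rewrite !sumC.
apply: eq_bigr => c _; apply: eq_bigr => b _.
rewrite (reindex_inj (addIr (- (b + c)))) /= -sum1_card [RHS]big_mkcond; apply: eq_bigr => s _.
rewrite /sigR /c0 /c1 /c2 /= (_ : s - (b + c) + b + c = s); last by ring.
by case: (s \in P).
Qed.

Lemma wt_cw (P : {set F}) a :
  wt (codeword m [set x | sigR x \in P] a) =
  (#|Lset m P (c0 a) (c2 a) (c1 a)| + #|Lset m P (c1 a) (c0 a) (c2 a)| + #|Lset m P (c2 a) (c1 a) (c0 a)|)%N.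
Proof.
rewrite /wt card_setE.
under eq_bigr do rewrite mxE.
rewrite (index_split _ (fun k j => (trF m (compR j (mulR a (nth (0,0,0) (enum [set x | sigR x \in P]) k))) != 0 : nat))).
rewrite (enum_sum _ (0,0,0) (fun x => \sum_(j < 3) ((trF m (compR j (mulR a x)) != 0)%R : nat))%N).
rewrite exchange_big !big_ord_recr big_ord0 /= add0n.
congr (_ + _ + _)%N; rewrite /Lset card_setE [LHS]big_mkcond; apply: eq_bigr => x _;
  rewrite inE; case: (sigR x \in P) => //=; rewrite (trF_eq0 m_gt0 cardF);
  congr (nat_of_bool (Tr m _ != 0)); rewrite /compR /mulR /mkR /c0 /c1 /c2 /=; ring.
Qed.


Lemma hamming0 n (c : 'rV['F_3]_n) : hamming c c = 0%N.
Proof. by apply/eqP; rewrite cards_eq0; apply/eqP/setP => i; rewrite !inE eqxx. Qed.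

Lemma optimal_gen (P : {set F}) :
  (forall a : F, a != 0 -> (#|P| * tnz F m <= #|F| * #|PA m P a|)%N) ->
  (0 < #|P|)%N ->
  (3 * (#|P| * (3 ^ m * 3 ^ m)) < gr (3 * m) (2 * #|P| * (3 ^ m * 3 ^ m)).+1)%N ->
  optimal (phiC m [set x | sigR x \in P]).
Proof.
move=> HP P0 Hgr.
set L := [set x | sigR x \in P].
have [ht hq] := card_tt m_gt0 cardF.
set W := (2 * #|P| * (3 ^ m * 3 ^ m))%N.
have wtW : forall a : RR F, ~~ [&& c0 a == 0, c1 a == 0 & c2 a == 0] -> (W <= wt (codeword m L a))%N.
  move=> a nz; rewrite wt_cw.
  have nz1 : [|| c0 a != 0, c2 a != 0 | c1 a != 0].
    by move: nz; case: (c0 a == 0); case: (c1 a == 0); case: (c2 a == 0).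
  have nz2 : [|| c1 a != 0, c0 a != 0 | c2 a != 0].
    by move: nz; case: (c0 a == 0); case: (c1 a == 0); case: (c2 a == 0).
  have nz3 : [|| c2 a != 0, c1 a != 0 | c0 a != 0].
    by move: nz; case: (c0 a == 0); case: (c1 a == 0); case: (c2 a == 0).
  have h1 := card_lin nz1 HP; have h2 := card_lin nz2 HP; have h3 := card_lin nz3 HP.
  move: h1 h2 h3; rewrite /W -cardF hq ht.
  set A1 := #|Lset _ _ _ _ _|; set A2 := #|Lset _ _ _ _ _|; set A3 := #|Lset _ _ _ _ _|.
  nia.
have hamW : forall a b, a != b -> (W <= hamming (codeword m L a) (codeword m L b))%N.
  move=> a b ab; rewrite hamming_cw; apply: wtW; rewrite /subR /mkR /c0 /c1 /c2 /= !subr_eq0.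
  apply: contra ab; case: a => [[a0 a1] a2]; case: b => [[b0 b1] b2] /=.
  by case/and3P => [/eqP-> /eqP-> /eqP->].
have Wpos : (0 < W)%N by rewrite /W; have := expn_gt0 3 m; nia.
have cw_inj : injective (codeword m L).
  move=> a b e; apply/eqP; apply/negPn/negP => ab; have := hamW a b ab.
  by rewrite e hamming0 leqNgt Wpos.
have dimS : (3 * m <= \dim <<phiC m L>>%VS)%N.
  have : (#|[set codeword m L a | a : RR F]| <= #|(<<phiC m L>>%VS)|)%N.
    apply: subset_leq_card; apply/subsetP => c /imsetP [a _ ->]; apply: memv_span.
    by apply: map_f; exact: mem_enum.
  rewrite card_imset // card_vspace.
  have -> : #|'F_3| = 3%N by rewrite card_Fp.
  rewrite !card_prod => h; rewrite -(leq_exp2l _ _ (isT : (1 < 3)%N)); apply: leq_trans h.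
  by rewrite cardF -!expnD (_ : (3 * m = m + m + m)%N) //; lia.
move=> C' dimC'.
have cL : (#|L| = 3 ^ m * (3 ^ m * #|P|))%N by rewrite card_Lsig cardF.
have mS : (W <= mindist (fun c => c \in phiC m L))%N.
  rewrite /mindist; apply: (big_ind (fun v => W <= v)%N) => [|x y hx hy|c _].
  - by rewrite cL /W; nia.
  - by rewrite leq_min hx hy.
  apply: (big_ind (fun v => W <= v)%N) => [|x y hx hy|d /and3P [hc hd cd]].
  - by rewrite cL /W; nia.
  - by rewrite leq_min hx hy.
  move: hc hd cd => /mapP [a _ ->] /mapP [b _ ->] cd.
  by apply: hamW; apply: contraNneq cd => ->.
suff : (mindist (fun c => c \in C') <= W)%N by move/leq_trans; apply.
rewrite leqNgt; apply/negP => hlt.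
have wC : forall x, x \in C' -> x != 0 -> (W.+1 <= wt x)%N.
  move=> x xC x0.
  have : (mindist (fun c => c \in C') <= hamming x 0)%N.
    rewrite /mindist; apply: leq_trans (@bigminn_le _ (fun _ => true) _ _ x isT) _.
    by apply: bigminn_le; rewrite xC mem0v x0.
  rewrite (_ : hamming x 0 = wt x); first by move=> h; apply: leq_trans hlt h.
  by apply: eq_card => i; rewrite !inE mxE.
have sup : forall x, x \in C' -> forall i, i \notin [set: 'I_(3 * #|L|)] -> x 0 i = 0.
  by move=> x _ i; rewrite in_setT.
have := griesmer (erefl (\dim C')) sup wC.
rewrite cardsT card_ord => hg.
have := gr_mono (3 * m) (\dim C' - 3 * m) W.+1; rewrite subnKC; last by rewrite dimC'.
move: Hgr hg cL; rewrite -/W; set G1 := gr _ _; set G2 := gr _ _; set NL := #|L|.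
set Q := (3 ^ m)%N; set NP := #|P|.
nia.
Qed.

End Final.

Lemma theorem6p1_aux (F : finFieldType) (m : nat) :
  (0 < m)%N -> #|F| = (3 ^ m)%N ->
  (odd m -> optimal (phiC m (Lprime F))) /\ optimal (phiC m (unitsR F)).
Proof.
move=> m0 cF; have q3 : (3 <= 3 ^ m)%N by rewrite -{1}(expn1 3) leq_exp2l.
split.
  move=> om; rewrite Lprime_sig.
  have hs := card_sq cF; rewrite cF in hs.
  apply: optimal_gen => //.
  - move=> a a0; have h := sq_split m0 cF om a0.
    rewrite (_ : #|PA m (sqQ F) a| = #|sqA m a|) //.
    move: h hs; rewrite cF; set X := #|sqA m a|; set t := tnz F m; set N := #|sqQ F|.
    nia.
  - lia.
  - have h : (2 * #|sqQ F| = 3 ^ m - 1)%N by rewrite hs subn1.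
    by have := gr_Lp m0 h; rewrite addn1.
rewrite (units_sig cF) (_ : [set x | sigR x != 0] = [set x | sigR x \in [set s : F | s != 0]]); last first.
  by apply/setP => x; rewrite !inE.
have cP : #|[set s : F | s != 0]| = (3 ^ m - 1)%N.
  by rewrite -cF subn1 -(cardsC1 (0:F)); apply: eq_card => y; rewrite !inE.
apply: optimal_gen => //.
- move=> a a0.
  have -> : #|PA m [set s : F | s != 0] a| = tnz F m.
    rewrite -(count_lin m 0 a0); apply: eq_card => s; rewrite !inE addr0.
    by case: (eqVneq s 0) => [->|] //=; rewrite mulr0 (Tr0 cF) eqxx.
  by rewrite cP cF leq_mul2r leq_subr orbT.
- by rewrite cP; lia.
- by rewrite cP; have := gr_units m0; rewrite addn1.
Qed.

Close Scope ring_scope.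
Unset Implicit Arguments.

Theorem theorem6p1 (F : finFieldType) (m : nat) :
  (0 < m)%N -> #|F| = (3 ^ m)%N ->
  (odd m -> optimal (phiC m (Lprime F))) /\ optimal (phiC m (unitsR F)).
Proof. exact: theorem6p1_aux. Qed.
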